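(* Let $p,q,r,n$ be integers with $r\ge 0$, $q\ge 2$, $p-q=2r+1$, $n=p+q$, and suppose $q\le 2r$. Then the integrality gap of the clique-web inequality with parameters $n,p,q,r$ is at most $3$, i.e. $\mathrm{sdp}(\mathrm{CW}^r_p,-e)/\mathrm{ip}(\mathrm{CW}^r_p,-e)\le 3$.
   Context: For integers $p,r$ with $p\ge 2r+3$, the antiweb $\mathrm{AW}^r_p$ is the graph on $[p]$ with edges $\{i,i+s\}$ for $i\in[p]$, $1\le s\le r$ (indices mod $p$); the web $\mathrm{W}^r_p$ is its complement in $K_p$. With $p,q,r,n$ as in the claim, $\mathrm{CW}^r_p$ is the graph on $[n]$ consisting of a clique on $\{1,\dots,q\}$, a copy of $\mathrm{W}^r_p$ on $\{q+1,\dots,n\}$, and all edges $ij$ with $1\le i\le q<j\le n$. The clique-web inequality is $-\sum_{ij\in E(\mathrm{CW}^r_p)}x_{ij}\le q(r+1)$. For a graph $G=([n],E)$ and $w\in\mathbb{R}^E$, $\mathrm{ip}(G,w)=\max_{x\in\{\pm1\}^n}\sum_{ij\in E}w_{ij}x_ix_j$ and $\mathrm{sdp}(G,w)=\max\sum_{ij\in E}w_{ij}u_i^Tu_j$ over unit vectors $u_i\in\mathbb{R}^n$; $e$ denotes the all-ones vector in $\mathbb{R}^{E(\mathrm{CW}^r_p)}$. The integrality gap of the clique-web inequality is $\mathrm{sdp}(\mathrm{CW}^r_p,-e)/\mathrm{ip}(\mathrm{CW}^r_p,-e)$, where $\mathrm{ip}(\mathrm{CW}^r_p,-e)=q(r+1)$.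 *)

(* Defs.v *)
From HB Require Import structures.
From mathcomp Require Import all_boot all_order all_algebra.
From mathcomp Require Import boolp classical_sets reals.
Set Implicit Arguments. Unset Strict Implicit. Unset Printing Implicit Defensive.
Import Order.TTheory GRing.Theory Num.Theory.
Local Open Scope ring_scope.
Local Open Scope classical_set_scope.

(* Vertices are 0-indexed: [n] = {1..n} is rendered as 'I_n = {0..n-1}. *)

Definition cdist (p a b : nat) : nat :=
  let d := if (a <= b)%N then (b - a)%N else (a - b)%N in minn d (p - d).

(* antiweb AW^r_p on {0..p-1}: edges {i, i+s mod p}, 1 <= s <= r *)
Definition antiweb_adj (p r a b : nat) : bool :=
  (0 < cdist p a b)%N && (cdist p a b <= r)%N.

Definition web_adj (p r a b : nat) : bool :=
  (a != b) && ~~ antiweb_adj p r a b.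

(* clique-web CW^r_p on 'I_n: clique on {0..q-1}, web on {q..n-1}
   (vertex i >= q is web vertex i - q), all edges between the two parts. *)
Definition CW_adj (n q p r : nat) : rel 'I_n :=
  fun i j => (i != j) &&
    (if ((i < q)%N || (j < q)%N) then true else web_adj p r (i - q) (j - q)).

Definition edge_sum (R : realType) (n : nat) (adj : rel 'I_n)
  (w : 'I_n -> 'I_n -> R) (f : 'I_n -> 'I_n -> R) : R :=
  \sum_(i < n) \sum_(j < n | (i < j)%N && adj i j) w i j * f i j.

Definition ip (R : realType) (n : nat) (adj : rel 'I_n) (w : 'I_n -> 'I_n -> R) : R :=
  sup [set v : R | exists x : 'I_n -> R,
         (forall i, x i = 1 \/ x i = -1) /\ v = edge_sum adj w (fun i j => x i * x j)].

Definition sdp (R : realType) (n : nat) (adj : rel 'I_n) (w : 'I_n -> 'I_n -> R) : R :=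
  sup [set v : R | exists u : 'I_n -> 'rV[R]_n,
         (forall i, \sum_(k < n) (u i 0 k) ^+ 2 = 1) /\
         v = edge_sum adj w (fun i j => \sum_(k < n) u i 0 k * u j 0 k)].

Definition minus_e (R : realType) (n : nat) : 'I_n -> 'I_n -> R := fun _ _ => -1.

(* Main.v *)
Require Import Defs.
From HB Require Import structures.
From mathcomp Require Import all_boot all_order all_algebra.
From mathcomp Require Import boolp classical_sets reals.
From mathcomp Require Import zify ring lra.
Import Order.TTheory GRing.Theory Num.Theory.
Set Implicit Arguments. Unset Strict Implicit.
Local Open Scope set_scope.
Definition gsh (p r a x : nat) : nat :=
  if (a + x < r)%N then (a + x + p - r)%N
  else if (a + x - r < p)%N then (a + x - r)%N else (a + x - r - p)%N.

Lemma gsh_lt p r a x : (a < p)%N -> (x < 2 * r + 1)%N -> (2 * r + 1 <= p)%N -> (gsh p r a x < p)%N.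
Proof. rewrite /gsh; case: ifP => H1; [|case: ifP => H2]; lia. Qed.

Lemma gsh_cd p r a x : (a < p)%N -> (x < 2 * r + 1)%N -> (2 * r + 1 <= p)%N -> (cdist p a (gsh p r a x) <= r)%N.
Proof. rewrite /gsh /cdist; repeat case: ifP => ?; lia. Qed.

Lemma gsh_inj p r a x y : (a < p)%N -> (x < 2 * r + 1)%N -> (y < 2 * r + 1)%N -> (2 * r + 1 <= p)%N ->
  gsh p r a x = gsh p r a y -> x = y.
Proof. rewrite /gsh; repeat case: ifP => ?; lia. Qed.

Lemma cd_pos p a b : (a < p)%N -> (b < p)%N -> a != b -> (0 < cdist p a b)%N.
Proof. move=> ha hb /eqP hab; rewrite /cdist; case: ifP => H; lia. Qed.

Lemma deg_le (p q r : nat) (k : 'I_p) : p = (q + 2 * r + 1)%N ->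
  (#|[pred k' : 'I_p | web_adj p r k k']| <= q)%N.
Proof.
move=> hp.
have hp' : (2 * r + 1 <= p)%N by lia.
pose A := [set k' : 'I_p | (cdist p k k' <= r)%N].
pose f := fun x : 'I_(2 * r + 1) => insubd k (gsh p r k x) : 'I_p.
have fv : forall x : 'I_(2 * r + 1), val (f x) = gsh p r k x.
  by move=> x; rewrite /f val_insubd gsh_lt.
have finj : injective f.
  move=> x y /(congr1 val); rewrite !fv => /gsh_inj H; apply/val_inj/H => //.
have sub : f @: [set: 'I_(2 * r + 1)] \subset A.
  apply/fintype.subsetP => b /imsetP [x _ ->]; rewrite inE fv gsh_cd //.
have cA := subset_leq_card sub; rewrite card_imset // cardsT card_ord in cA.
have sub2 : [pred k' : 'I_p | web_adj p r k k'] \subset ~: A.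
  apply/fintype.subsetP => b; rewrite !inE /web_adj /antiweb_adj => /andP [hne].
  by rewrite cd_pos // ?ltn_ord.
have := subset_leq_card sub2; have := cardsC A; rewrite card_ord. move=> H1 H2; apply: leq_trans H2 _; move: cA H1; set a := #|A|; set b := #|~: A|; lia.
Qed.
Local Close Scope set_scope.
Local Open Scope ring_scope.
Section Gen.
Variable R : realType.

Definition Gm N (u : 'I_N -> 'rV[R]_N) i j := \sum_(k < N) u i 0 k * u j 0 k.

Lemma Gm_bounds N (u : 'I_N -> 'rV[R]_N) i j :
  (forall i, \sum_(k < N) (u i 0 k) ^+ 2 = 1) -> -1 <= Gm u i j <= 1.
Proof.
move=> hu; rewrite /Gm.
have h1 : 0 <= \sum_(k < N) (u i 0 k - u j 0 k) ^+ 2 by apply: sumr_ge0 => k _; apply: sqr_ge0.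
have h2 : 0 <= \sum_(k < N) (u i 0 k + u j 0 k) ^+ 2 by apply: sumr_ge0 => k _; apply: sqr_ge0.
have e1 : \sum_(k < N) (u i 0 k - u j 0 k) ^+ 2 =
   \sum_(k < N) (u i 0 k) ^+ 2 + \sum_(k < N) (u j 0 k) ^+ 2 - 2 * \sum_(k < N) u i 0 k * u j 0 k.
  rewrite mulr_sumr -big_split -sumrB /=; apply: eq_bigr => k _; ring.
have e2 : \sum_(k < N) (u i 0 k + u j 0 k) ^+ 2 =
   \sum_(k < N) (u i 0 k) ^+ 2 + \sum_(k < N) (u j 0 k) ^+ 2 + 2 * \sum_(k < N) u i 0 k * u j 0 k.
  rewrite mulr_sumr -!big_split /=; apply: eq_bigr => k _; ring.
rewrite e1 !hu in h1; rewrite e2 !hu in h2.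
apply/andP; split; lra.
Qed.

Lemma sos N (u : 'I_N -> 'rV[R]_N) (c : 'I_N -> R) :
  0 <= \sum_i \sum_j c i * c j * Gm u i j.
Proof.
have h : 0 <= \sum_(k < N) (\sum_i c i * u i 0 k) ^+ 2 by apply: sumr_ge0 => k _; apply: sqr_ge0.
apply: (le_trans h) ; rewrite le_eqVlt; apply/orP; left; apply/eqP.
under eq_bigr do rewrite expr2 mulr_suml.
rewrite exchange_big; apply: eq_bigr => i _.
under eq_bigr do rewrite mulr_sumr.
rewrite exchange_big; apply: eq_bigr => j _.
rewrite /Gm mulr_sumr; apply: eq_bigr => k _; ring.
Qed.

Lemma sym_sum N (P : rel 'I_N) (F : 'I_N -> 'I_N -> R) :
  (forall i j, P i j = P j i) -> (forall i, P i i = false) -> (forall i j, F i j = F j i) ->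
  \sum_(i : 'I_N) \sum_(j : 'I_N | P i j) F i j =
  \sum_(i : 'I_N) \sum_(j : 'I_N | (i < j)%N && P i j) F i j + \sum_(i : 'I_N) \sum_(j : 'I_N | (i < j)%N && P i j) F i j.
Proof.
move=> Ps Pi Fs.
have e : forall i : 'I_N, \sum_(j : 'I_N | P i j) F i j =
   \sum_(j : 'I_N | (i < j)%N && P i j) F i j + \sum_(j : 'I_N | (j < i)%N && P i j) F i j.
  move=> i; rewrite (bigID (fun j : 'I_N => (i < j)%N) (fun j => P i j)) /=; congr (_ + _); apply: eq_bigl => j.
    by case: (P i j); case: (i < j)%N.
  case: (ltngtP i j) => h; rewrite ?andbT ?andbF //=.
  have e : i = j by apply: val_inj.
  by rewrite e Pi.
under eq_bigr do rewrite e.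
rewrite big_split /=; congr (_ + _).
under eq_bigr do rewrite big_mkcond.
rewrite exchange_big; apply: eq_bigr => i _; rewrite [RHS]big_mkcond; apply: eq_bigr => j _.
by rewrite Ps Fs.
Qed.

Lemma sum_ind (T : finType) (b : pred T) : \sum_(i : T) ((b i)%:R : R) = (#|b|)%:R.
Proof.
rewrite (bigID b) /= [X in _ + X]big1 ?addr0; last by move=> i /negbTE ->.
by rewrite (eq_bigr (fun _ => 1)) ?sumr_const // => i ->.
Qed.

Lemma sum_delta (T : finType) (x : T) (c : R) : \sum_(y : T) ((x == y)%:R * c) = c.
Proof.
rewrite (bigD1 x) //= eqxx mul1r big1 ?addr0 // => y hy.
by rewrite eq_sym (negbTE hy) mul0r.
Qed.

Lemma split2 q p (F : 'I_(q + p) -> 'I_(q + p) -> R) :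
  \sum_i \sum_j F i j =
  \sum_(x < q) (\sum_(y < q) F (lshift p x) (lshift p y) + \sum_(k < p) F (lshift p x) (rshift q k))
  + \sum_(k < p) (\sum_(y < q) F (rshift q k) (lshift p y) + \sum_(k' < p) F (rshift q k) (rshift q k')).
Proof.
rewrite big_split_ord; congr (_ + _); apply: eq_bigr => i _; by rewrite big_split_ord.
Qed.

End Gen.

Section Adj.
Variables q p r : nat.
Lemma adj_ll (x y : 'I_q) : @CW_adj (q + p) q p r (lshift p x) (lshift p y) = (x != y).
Proof. by rewrite /CW_adj (inj_eq (@lshift_inj _ _)) /= ltn_ord andbT. Qed.
Lemma adj_lr (x : 'I_q) (k : 'I_p) : @CW_adj (q + p) q p r (lshift p x) (rshift q k) = true.
Proof.
rewrite /CW_adj /= ltn_ord andbT; apply/eqP => /(congr1 val) /= h.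
by have := ltn_ord x; rewrite h ltnNge leq_addr.
Qed.
Lemma adj_rl (x : 'I_q) (k : 'I_p) : @CW_adj (q + p) q p r (rshift q k) (lshift p x) = true.
Proof.
rewrite /CW_adj /= ltn_ord orbT andbT; apply/eqP => /(congr1 val) /= h.
by have := ltn_ord x; rewrite -h ltnNge leq_addr.
Qed.
Lemma adj_rr (k k' : 'I_p) : @CW_adj (q + p) q p r (rshift q k) (rshift q k') = web_adj p r k k'.
Proof.
have h : forall m, (q + m < q)%N = false by move=> m; rewrite ltnNge leq_addr.
rewrite /CW_adj /= !h /= !addKn (inj_eq (@rshift_inj _ _)) /web_adj.
by case: (k =P k') => [->|/eqP h2]; rewrite ?eqxx //= h2.
Qed.
End Adj.

Lemma cdist_sym p a b : cdist p a b = cdist p b a.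
Proof. rewrite /cdist; do 2 case: ifP; lia. Qed.

Lemma CW_sym N q p r : forall i j : 'I_N, @CW_adj N q p r i j = @CW_adj N q p r j i.
Proof.
move=> i j; rewrite /CW_adj eq_sym orbC /web_adj /antiweb_adj cdist_sym.
by case: (i =P j) => [->|_] //=; rewrite (eq_sym (j - q)%N).
Qed.

Lemma CW_irr N q p r : forall i : 'I_N, @CW_adj N q p r i i = false.
Proof. by move=> i; rewrite /CW_adj eqxx. Qed.

Section Main.
Variable R : realType.

Definition cc q N (P Q : R) (i : 'I_N) : R := if (i < q)%N then P else Q.
Definition KK q p r (P Q : R) (i j : 'I_(q + p)) : R :=
  if (i < q)%N then (if (j < q)%N then P * (P - Q) + (i == j)%:R * (P * Q) else 0)
  else (if (j < q)%N then 0 else Q ^+ 2 + (@CW_adj (q + p) q p r i j)%:R * (P * Q - 2 * Q ^+ 2)).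

Arguments KK : clear implicits.
Arguments cc q {N} P Q i.

Lemma sum3 N (F1 F2 F3 : 'I_N -> 'I_N -> R) :
  \sum_i \sum_j (F1 i j - F2 i j + F3 i j) =
  \sum_i \sum_j F1 i j - \sum_i \sum_j F2 i j + \sum_i \sum_j F3 i j.
Proof.
rewrite -sumrB -big_split /=; apply: eq_bigr => i _.
by rewrite -sumrB -big_split.
Qed.

Lemma sdp_bound q p r (u : 'I_(q + p) -> 'rV[R]_(q + p)) :
  (2 <= q)%N -> p = (q + 2 * r + 1)%N -> (q <= 2 * r)%N ->
  (forall i, \sum_(k < q + p) (u i 0 k) ^+ 2 = 1) ->
  edge_sum (@CW_adj (q + p) q p r) (@minus_e R (q + p))
     (fun i j => \sum_(k < q + p) u i 0 k * u j 0 k) <= (3 * q * r + 2 * q)%:R.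
Proof.
move=> hq hp hqr hu.
set P : R := p%:R; set Q : R := q%:R; set Rr : R := r%:R.
have hPQ : P = Q + 2 * Rr + 1 by rewrite /P /Q /Rr hp natrD natrD natrM.
have hQ : 2 <= Q by rewrite /Q (ler_nat R 2 q).
have hR : 0 <= Rr by rewrite /Rr ler0n.
have hQR : Q <= 2 * Rr by rewrite /Q /Rr -(natrM R 2 r) ler_nat.
set adj := @CW_adj (q + p) q p r.
set G := Gm u.
set X := \sum_(i : 'I_(q + p)) \sum_(j : 'I_(q + p) | (i < j)%N && adj i j) G i j.
have hE : edge_sum adj (@minus_e R (q + p)) (fun i j => \sum_(k < q + p) u i 0 k * u j 0 k) = - X.
  rewrite /edge_sum /minus_e /X -sumrN; apply: eq_bigr => i _.
  rewrite -sumrN; apply: eq_bigr => j _; by rewrite mulN1r.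
have hS : \sum_(i : 'I_(q + p)) \sum_(j : 'I_(q + p) | adj i j) G i j = X + X.
  apply: sym_sum; [exact: CW_sym | exact: CW_irr | move=> i j; rewrite /G /Gm; apply: eq_bigr => k _; exact: mulrC].
have hent : forall i j, 0 <= P * Q * (if adj i j then G i j else 0) - cc q P Q i * cc q P Q j * G i j + KK q p r P Q i j.
  move=> i j; have /andP [hl hh] := Gm_bounds i j hu.
  rewrite /cc /KK /adj; case: (eqVneq i j) => [<-|hij].
    have -> : G i i = 1 by rewrite /G /Gm -(hu i); apply: eq_bigr => k _; rewrite expr2.
    rewrite CW_irr ?eqxx; case: (i < q)%N; rewrite /= ?mulr1n ?mulr0n; nra.
  have hP0 : 0 <= P by rewrite hPQ; lra.
  have hPQ1 : 0 <= P - Q by rewrite hPQ; lra.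
  have hPQ2 : 0 <= P * Q - Q ^+ 2 by rewrite expr2 -mulrBl; apply: mulr_ge0 => //; lra.
  have h1G : 0 <= 1 - G i j by rewrite /G; lra.
  have hG1 : 0 <= G i j + 1 by rewrite /G; lra.
  have k1 : 0 <= P * (P - Q) * (1 - G i j) by apply: mulr_ge0 => //; apply: mulr_ge0.
  have k2 : 0 <= (P * Q - Q ^+ 2) * (G i j + 1) by apply: mulr_ge0.
  have k3 : 0 <= Q ^+ 2 * (1 - G i j) by apply: mulr_ge0 => //; apply: sqr_ge0.
  rewrite /CW_adj hij /= ?mulr1n ?mulr0n.
  case: (i < q)%N; case: (j < q)%N => /=; rewrite ?mulr1n ?mulr0n; try nra.
  case: (web_adj p r (i - q)%N (j - q)%N) => /=; rewrite ?mulr1n ?mulr0n; nra.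
have hK : \sum_i \sum_j KK q p r P Q i j <= P * Q * (3 * P * Q - 3 * Q ^+ 2 + Q).
  have hlt : forall m, (q + m < q)%N = false by move=> m; rewrite ltnNge leq_addr.
  have hD : 0 <= P * Q - 2 * Q ^+ 2 by rewrite hPQ; nra.
  rewrite split2.
  have -> : 3 * P * Q - 3 * Q ^+ 2 + Q = (Q * (P - Q) + Q) + (P * Q + (P * Q - 2 * Q ^+ 2)) by ring.
  rewrite [X in _ <= X]mulrDr; apply: lerD.
    rewrite (eq_bigr (fun _ => Q * (P * (P - Q)) + P * Q)); last first.
      move=> x _; rewrite [X in X + _ = _]( eq_bigr (fun y => P * (P - Q) + (x == y)%:R * (P * Q))); last first.
        by move=> y _; rewrite /KK /= !ltn_ord (inj_eq (@lshift_inj _ _)).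
      rewrite [X in _ + X = _]big1; last by move=> k _; rewrite /KK /= ltn_ord hlt.
      rewrite big_split /= sum_delta sumr_const card_ord -mulr_natl addr0.
      by rewrite -/Q mulrC.
    rewrite sumr_const card_ord -mulr_natl -/Q le_eqVlt; apply/orP; left; apply/eqP; ring.
  apply: (le_trans (y := \sum_(k < p) (P * Q ^+ 2 + Q * (P * Q - 2 * Q ^+ 2)))).
    apply: ler_sum => k _.
    rewrite big1; last by move=> y _; rewrite /KK /= ltn_ord hlt.
    rewrite add0r (eq_bigr (fun k' : 'I_p => Q ^+ 2 + (web_adj p r k k')%:R * (P * Q - 2 * Q ^+ 2))); last first.
      by move=> k' _; rewrite /KK /= !hlt adj_rr.
    rewrite big_split /= sumr_const card_ord -mulr_suml sum_ind.
    apply: lerD; first by rewrite -mulr_natl -/P.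
    apply: ler_wpM2r => //.
    by rewrite /Q ler_nat; apply: deg_le.
  rewrite sumr_const card_ord -mulr_natl -/P le_eqVlt; apply/orP; left; apply/eqP; ring.
have hsos := sos u (cc q P Q).
have hH : 0 <= \sum_i \sum_j (P * Q * (if adj i j then G i j else 0) - cc q P Q i * cc q P Q j * G i j + KK q p r P Q i j).
  by apply: sumr_ge0 => i _; apply: sumr_ge0 => j _; apply: hent.
rewrite sum3 in hH.
have e1 : \sum_i \sum_j P * Q * (if adj i j then G i j else 0) = P * Q * (X + X).
  rewrite -hS mulr_sumr; apply: eq_bigr => i _; by rewrite [in RHS]big_mkcond mulr_sumr.
rewrite e1 in hH.
have hPQp : 0 < P * Q by rewrite mulr_gt0 // ?hPQ; lra.
have hY : 0 <= P * Q * (X + X + 6 * Q * Rr + 4 * Q).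
  have -> : P * Q * (X + X + 6 * Q * Rr + 4 * Q) = P * Q * (X + X) + P * Q * (3 * P * Q - 3 * Q ^+ 2 + Q) by rewrite hPQ; ring.
  lra.
rewrite pmulr_rge0 // in hY.
rewrite hE natrD natrM natrM natrM -/Q -/Rr; lra.
Qed.


Definition x0 q N (i : 'I_N) : R := if (i < q)%N then -1 else 1.

Arguments x0 q {N} i.

Lemma ip_low q p r : (2 <= q)%N -> p = (q + 2 * r + 1)%N -> (q <= 2 * r)%N ->
  (q%:R * (r%:R + 1) : R) <= edge_sum (@CW_adj (q + p) q p r) (@minus_e R (q + p))
     (fun i j => x0 q i * x0 q j).
Proof.
move=> hq hp hqr.
set P : R := p%:R; set Q : R := q%:R; set Rr : R := r%:R.
have hPQ : P = Q + 2 * Rr + 1 by rewrite /P /Q /Rr hp natrD natrD natrM.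
set adj := @CW_adj (q + p) q p r.
set X := \sum_(i : 'I_(q + p)) \sum_(j : 'I_(q + p) | (i < j)%N && adj i j) x0 q i * x0 q j.
have hE : edge_sum adj (@minus_e R (q + p)) (fun i j => x0 q i * x0 q j) = - X.
  rewrite /edge_sum /minus_e /X -sumrN; apply: eq_bigr => i _.
  rewrite -sumrN; apply: eq_bigr => j _; by rewrite mulN1r.
have hS : \sum_(i : 'I_(q + p)) \sum_(j : 'I_(q + p) | adj i j) x0 q i * x0 q j = X + X.
  apply: sym_sum; [exact: CW_sym | exact: CW_irr | move=> i j; exact: mulrC].
have hlt : forall m, (q + m < q)%N = false by move=> m; rewrite ltnNge leq_addr.
have hB : \sum_(i : 'I_(q + p)) \sum_(j : 'I_(q + p) | adj i j) x0 q i * x0 q j <= Q * (Q - 1 - P).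
  rewrite (eq_bigr (fun i => \sum_j (if adj i j then x0 q i * x0 q j else 0))); last by move=> i _; rewrite big_mkcond.
  rewrite split2 -[X in _ <= X]addr0; apply: lerD.
    rewrite (eq_bigr (fun _ => Q - 1 - P)); last first.
      move=> x _; rewrite [X in X + _ = _](eq_bigr (fun y => 1 - (x == y)%:R * 1)); last first.
        by move=> y _; rewrite /adj adj_ll /x0 /= !ltn_ord; case: (x =P y) => _ /=; rewrite ?mulr1 ?subrr ?subr0 //; rewrite mulrNN mulr1.
      rewrite [X in _ + X = _](eq_bigr (fun _ => -1)); last first.
        by move=> k _; rewrite /adj adj_lr /x0 /= ltn_ord hlt mulr1.
      rewrite sumrB sum_delta !sumr_const !card_ord mulNrn -/P -/Q; ring.
    rewrite sumr_const card_ord -mulr_natl -/Q le_eqVlt; apply/orP; left; apply/eqP; ring.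
  apply: sumr_le0 => k _.
  rewrite [X in X + _](eq_bigr (fun _ => -1)); last first.
    by move=> y _; rewrite /adj adj_rl /x0 /= ltn_ord hlt mul1r.
  rewrite [X in _ + X](eq_bigr (fun k' : 'I_p => (web_adj p r k k')%:R)); last first.
    by move=> k' _; rewrite /adj adj_rr /x0 /= !hlt mulr1; case: (web_adj _ _ _ _).
  rewrite sumr_const card_ord sum_ind mulNrn -/Q.
  have := deg_le k hp; rewrite -(ler_nat R) => h.
  lra.
rewrite hS in hB; rewrite hE -/Q -/Rr.
have hQ : 0 < Q by rewrite /Q ltr0n; lia.
rewrite hPQ in hB; nra.
Qed.

Lemma ip_ub N (adj : rel 'I_N) (x : 'I_N -> R) : (forall i, x i = 1 \/ x i = -1) ->
  edge_sum adj (@minus_e R N) (fun i j => x i * x j) <= (N * N)%:R.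
Proof.
move=> hx; rewrite /edge_sum.
apply: (le_trans (y := \sum_(i < N) (N%:R : R))).
  apply: ler_sum => i _; apply: (le_trans (y := \sum_(j < N) (1 : R))).
    rewrite big_mkcond; apply: ler_sum => j _.
    case: (_ && _) => //; rewrite /minus_e.
    by case: (hx i) => ->; case: (hx j) => ->; lra.
  by rewrite sumr_const card_ord.
by rewrite sumr_const card_ord natrM mulr_natr lexx.
Qed.

End Main.

Theorem mainTheorem11 (R : realType) (p q r n : nat) :
  (2 <= q)%N -> p = (q + 2 * r + 1)%N -> n = (p + q)%N -> (q <= 2 * r)%N ->
  sdp (@CW_adj n q p r) (@minus_e R n) / ip (@CW_adj n q p r) (@minus_e R n) <= 3.
Proof.
move=> hq hp hn hqr.
have hn' : n = (q + p)%N by rewrite hn addnC.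
clear hn; subst n.
have hs : sdp (@CW_adj (q + p) q p r) (@minus_e R (q + p)) <= (3 * q * r + 2 * q)%:R.
  apply: ge_sup.
    exists (edge_sum (@CW_adj (q + p) q p r) (@minus_e R (q + p))
        (fun i j => \sum_(k < q + p) (\row_k' ((k' == i)%:R : R)) 0 k * (\row_k' ((k' == j)%:R : R)) 0 k)).
    exists (fun i => \row_k' ((k' == i)%:R : R)); split => // i.
    rewrite (eq_bigr (fun k => (i == k)%:R * 1)) ?sum_delta // => k _.
    by rewrite mxE eq_sym; case: (i == k); rewrite ?expr2 ?mulr1 ?mul0r ?mulr0.
  move=> v [u [hu ->]]; exact: sdp_bound.
have hi : (q%:R * (r%:R + 1) : R) <= ip (@CW_adj (q + p) q p r) (@minus_e R (q + p)).
  apply: le_trans (ip_low R hq hp hqr) _.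
  apply: sup_upper_bound; last first.
    by exists (@x0 R q (q + p)); split => // i; rewrite /x0; case: (_ < _)%N; [right|left].
  split.
    by exists (edge_sum (@CW_adj (q + p) q p r) (@minus_e R (q + p)) (fun i j => @x0 R q (q + p) i * @x0 R q (q + p) j)); exists (@x0 R q (q + p)); split => // i; rewrite /x0; case: (_ < _)%N; [right|left].
  exists ((q + p) * (q + p))%:R; move=> v [x [hx ->]]; exact: ip_ub.
have hQ : 0 < (q%:R : R) by rewrite ltr0n; lia.
have hpos : 0 < ip (@CW_adj (q + p) q p r) (@minus_e R (q + p)).
  apply: lt_le_trans hi; apply: mulr_gt0 => //; rewrite ltr_wpDl ?ler0n //.
rewrite ler_pdivrMr //.
move: hs hi; rewrite natrD natrM natrM natrM; nra.
Qed.
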